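(* Let $\lambda=(\lambda_1,\dots,\lambda_d)$ be a partition of $n\ge2$. For distinct $i,j\in\{0,\dots,n-2\}$, we have $i\preceq j$ in $P(\lambda)$ if and only if $i<j$ and for each $t\in\{1,\dots,d\}$ one of the following holds: (1) $s_{t,i}>s_{t,j}>0$; (2) $s_{t,i}=0$ and $s_{t,j}=s_{t,j-i}$; (3) $s_{t,j}=s_{t,i}>0$ and $s_{t,j-i}=0$.
   Context: $\Delta_\lambda=\mathrm{conv}(e_1,\dots,e_d,\lambda)\subset\mathbb{R}^d$, with fundamental parallelepiped $\Pi_\lambda=\{\sum_{i=1}^d\gamma_i(1,e_i)+\gamma_{d+1}(1,\lambda):0\le\gamma_i<1\}\subset\mathbb{R}^{d+1}$. $P(\lambda)$ is $\Pi_\lambda\cap\mathbb{Z}^{d+1}$ ordered by $\sigma\preceq\mu$ iff $\mu-\sigma\in\Pi_\lambda\cap\mathbb{Z}^{d+1}$. For $0\le b<n-1$ set $p(b)=\left(\sum_{t}\lceil b\lambda_t/(n-1)\rceil-b,\ \lceil b\lambda_1/(n-1)\rceil,\dots,\lceil b\lambda_d/(n-1)\rceil\right)$; $b\mapsto p(b)$ is a bijection from $\{0,\dots,n-2\}$ onto $\Pi_\lambda\cap\mathbb{Z}^{d+1}$ and each integer $b$ is identified with $p(b)$. For $0\le i<n-1$ and $1\le t\le d$, the integers $r_{t,i}\ge0$ and $0\le s_{t,i}<n-1$ are defined by $i\lambda_t=r_{t,i}(n-1)+s_{t,i}$. *)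

(* Defs.v *)
From HB Require Import structures.
From mathcomp Require Import all_boot all_order all_algebra.
Unset Printing Implicit Defensive.
Import Order.TTheory GRing.Theory Num.Theory.

(* lambda is a partition of n: a weakly decreasing sequence of positive
   integers summing to n; d = size lam, lambda_t = nth 0 lam t (0-indexed). *)
Definition is_partition (n : nat) (lam : seq nat) : Prop :=
  [/\ sorted geq lam, all (fun x => 0 < x) lam & sumn lam = n].

Definition ceil_div (a m : nat) : nat := (a + m.-1) %/ m.

(* p(b) = (sum_t ceil(b lam_t/(n-1)) - b, ceil(b lam_1/(n-1)), ..., ceil(b lam_d/(n-1)))
   as a pair (first coordinate, remaining d coordinates) in Z x Z^d. *)
Definition p0 (n : nat) (lam : seq nat) (b : nat) : int :=
  (\sum_(t < size lam) ceil_div (b * nth 0 lam t) n.-1)%:Z - b%:Z.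
Definition p1 (n : nat) (lam : seq nat) (b : nat) (t : 'I_(size lam)) : int :=
  (ceil_div (b * nth 0 lam t) n.-1)%:Z.

(* Membership of (x0, x) in Z^{d+1} in the fundamental parallelepiped
   Pi_lam = { sum_i g_i (1, e_i) + g_{d+1} (1, lam) : 0 <= g_i < 1 }
   (coefficients g taken in the ordered field R; the index ord_max of
   'I_(d.+1) plays the role of d+1). *)
Definition in_Pi (R : realFieldType) (lam : seq nat) (x0 : int)
    (x : 'I_(size lam) -> int) : Prop :=
  exists g : 'I_(size lam).+1 -> R,
    (forall k, 0 <= g k /\ g k < 1)%R /\
    (x0%:~R = \sum_(k < (size lam).+1) g k)%R /\
    (forall t : 'I_(size lam),
        (x t)%:~R = g (widen_ord (leqnSn _) t) + g ord_max * (nth 0 lam t)%:R)%R.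

(* i <= j in P(lambda), identifying b with p(b): p(j) - p(i) in Pi_lam cap Z^{d+1} *)
Definition preceq (R : realFieldType) (n : nat) (lam : seq nat) (i j : nat) : Prop :=
  in_Pi R lam (p0 n lam j - p0 n lam i)%R (fun t => p1 n lam j t - p1 n lam i t)%R.

Definition s_ (n : nat) (lam : seq nat) (t : nat) (i : nat) : nat :=
  (i * nth 0 lam t) %% n.-1.

(* Main.v *)
Require Import Defs.
From HB Require Import structures.
From mathcomp Require Import all_boot all_order all_algebra.
From mathcomp Require Import zify ring lra.
Import Order.TTheory GRing.Theory Num.Theory.

Lemma ceil_divE A N : 0 < N -> ceil_div A N = A %/ N + (0 < A %% N).
Proof.
move=> N0; rewrite /ceil_div {1}(divn_eq A N) -addnA (divnMDl _ _ N0).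
congr (_ + _); case: (posnP (A %% N)) => [->|s0] /=.
  by rewrite add0n divn_small // prednK.
have -> : A %% N + N.-1 = 1 * N + (A %% N).-1 by lia.
rewrite (divnMDl _ _ N0) divn_small //; have := ltn_pmod A N0; lia.
Qed.

Lemma mod_sub0 A B N : B <= A -> B %% N = 0 -> (A - B) %% N = A %% N.
Proof.
move=> le B0; rewrite -{2}(subnK le) -modnDmr B0 addn0 //.
Qed.

Lemma mod_subeq A B N : B <= A -> A %% N = B %% N -> (A - B) %% N = 0.
Proof. by move=> le /eqP; rewrite eqn_mod_dvd // => /eqP. Qed.

Lemma core A B N : 0 < N -> B <= A ->
  ((0 <= (ceil_div A N * N)%:Z - (ceil_div B N * N)%:Z - (A%:Z - B%:Z))%R <->
  ((A %% N < B %% N /\ 0 < A %% N)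
   \/ (B %% N = 0 /\ A %% N = (A - B) %% N)
   \/ (A %% N = B %% N /\ 0 < A %% N /\ (A - B) %% N = 0))).
Proof.
move=> N0 le; rewrite !ceil_divE //.
have hA := divn_eq A N; have hB := divn_eq B N.
have lA := ltn_pmod A N0; have lB := ltn_pmod B N0.
set qa := A %/ N in hA *; set qb := B %/ N in hB *.
set sa := A %% N in hA lA *; set sb := B %% N in hB lB *.
split.
- case: (posnP sb) => [sb0|sbp].
    by right; left; split=> //; rewrite mod_sub0 //.
  case: (posnP sa) => [sa0|sap] /=.
    rewrite sa0 /= => H. exfalso. lia.
  move=> H.
  case: (ltngtP sa sb) => c.
  + by left.
  + exfalso; lia.
  + by right; right; split=> //; split=> //; rewrite mod_subeq.
- case=> [[c1 c2]|[[c1 c2]|[c1 [c2 c3]]]].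
  + have -> : (0 < sa) = true by apply/idP.
    have -> : (0 < sb) = true by lia.
    lia.
  + rewrite c1 /=; have [h|h] := posnP sa; rewrite ?h /= ?addn0; lia.
  + have -> : (0 < sa) = true by apply/idP.
    have -> : (0 < sb) = true by lia.
    lia.
Qed.

Lemma core_lt A B N : 0 < N ->
  ((ceil_div A N * N)%:Z - (ceil_div B N * N)%:Z - (A%:Z - B%:Z) < N%:Z)%R.
Proof.
move=> N0; rewrite !ceil_divE //.
have hA := divn_eq A N; have hB := divn_eq B N.
have lA := ltn_pmod A N0; have lB := ltn_pmod B N0.
set qa := A %/ N in hA *; set qb := B %/ N in hB *.
set sa := A %% N in hA lA *; set sb := B %% N in hB lB *.
have [h|h] := posnP sa; have [h'|h'] := posnP sb; rewrite ?h ?h' /= ?addn0 ?addn1; lia.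
Qed.

Lemma intrnat (R : pzRingType) k : (((k%:Z)%:~R : R) = k%:R)%R.
Proof. by []. Qed.

Lemma sum_lam n lam : is_partition n lam -> \sum_(t < size lam) nth 0 lam t = n.
Proof. by case=> _ _ <-; rewrite sumnE (big_nth 0) big_mkord. Qed.



Lemma alg_id (R : comPzRingType) (a b gm N l j i : R) :
  (gm * N = j - i -> (a - b - gm * l) * N = a * N - b * N - (j * l - i * l))%R.
Proof.
move=> e; have -> : ((a - b - gm * l) * N = a * N - b * N - (gm * N) * l)%R by ring.
rewrite e; ring.
Qed.

Theorem theorem2p17 (R : realFieldType) (n : nat) (lam : seq nat) :
  2 <= n -> is_partition n lam ->
  forall i j : nat, i < n.-1 -> j < n.-1 -> i != j ->
  (preceq R n lam i j <->
   (i < j /\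
    forall t : 'I_(size lam),
      (s_ n lam t j < s_ n lam t i /\ 0 < s_ n lam t j)
      \/ (s_ n lam t i = 0 /\ s_ n lam t j = s_ n lam t (j - i))
      \/ (s_ n lam t j = s_ n lam t i /\ 0 < s_ n lam t j /\ s_ n lam t (j - i) = 0))).
Proof.
move=> n2 part i j iN jN ij.
have N0 : (0 < n.-1)%N by lia.
have sl := sum_lam _ _ part.
have nE : (n%:R = (n.-1)%:R + 1 :> R)%R by rewrite natr1 prednK //; lia.
have hN : (0 < (n.-1)%:R :> R)%R by rewrite ltr0n.
rewrite /preceq /in_Pi /p0 /p1.
set N := n.-1 in N0 iN jN nE hN *.
set l := fun t : 'I_(size lam) => nth 0 lam t.
have sl' : (\sum_(t < size lam) l t)%N = n := sl.
set cj := fun t : 'I_(size lam) => ceil_div (j * l t) N.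
set ci := fun t : 'I_(size lam) => ceil_div (i * l t) N.
have Gint : forall t : 'I_(size lam), (((cj t * N)%:Z - (ci t * N)%:Z - ((j * l t)%:Z - (i * l t)%:Z))%:~R
     = (cj t)%:R * N%:R - (ci t)%:R * N%:R - (j%:R * (l t)%:R - i%:R * (l t)%:R) :> R)%R.
  by move=> t; rewrite !intrB !intrnat !natrM.
split.
- case=> g [gb [H0 Ht]].
  have H0' : (\sum_t ((cj t)%:R : R) - j%:R - (\sum_t ((ci t)%:R : R) - i%:R)
      = \sum_(t < size lam) g (widen_ord (leqnSn _) t) + g ord_max)%R.
    by move: H0; rewrite big_ord_recr /= !intrB !intrnat !natr_sum => h; exact h.
  have Ht' : forall t, (g (widen_ord (leqnSn _) t) = (cj t)%:R - (ci t)%:R - g ord_max * (l t)%:R)%R.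
    by move=> t; have := Ht t; rewrite intrB !intrnat; lra.
  have Sl : (\sum_t ((l t)%:R : R) = n%:R)%R by rewrite -natr_sum sl.
  have Sg : (\sum_(t < size lam) g (widen_ord (leqnSn _) t) = \sum_t ((cj t)%:R : R) - \sum_t ((ci t)%:R : R) - g ord_max * \sum_t ((l t)%:R : R))%R.
    by rewrite (eq_bigr _ (fun t _ => Ht' t)) !sumrB -mulr_sumr.
  have key : (g ord_max * N%:R = j%:R - i%:R)%R.
    rewrite Sl nE in Sg; lra.
  have lij : (i <= j)%N.
    by rewrite -(ler_nat R) -subr_ge0 -key mulr_ge0 // ?(gb ord_max).1 // ltW.
  split; first by rewrite ltn_neqAle ij.
  move=> t.
  have G0 := core (j * l t) (i * l t) N N0 (leq_mul lij (leqnn _)).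
  rewrite /s_ mulnBl; apply G0.1.
  rewrite -(ler0z R) Gint -(alg_id _ _ _ _ _ _ _ _ key).
  rewrite -Ht'; apply: mulr_ge0; [exact: (gb _).1 | exact: ltW].
- case=> lij H.
  pose gm := ((j%:R - i%:R) / N%:R : R)%R.
  have gmN : (gm * N%:R = j%:R - i%:R)%R by rewrite /gm divfK // lt0r_neq0.
  pose G t := ((cj t)%:R - (ci t)%:R - gm * (l t)%:R : R)%R.
  have Gb : forall t, (0 <= G t /\ G t < 1)%R.
    move=> t; have le : (i * l t <= j * l t)%N by apply: leq_mul (ltnW lij) (leqnn _).
    have G0 := (core (j * l t) (i * l t) N N0 le).2.
    have G1 := core_lt (j * l t) (i * l t) N N0.
    have E := alg_id _ (cj t)%:R (ci t)%:R _ _ (l t)%:R _ _ gmN.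
    rewrite -Gint in E.
    split.
      rewrite -(pmulr_lge0 _ hN) /G E ler0z; apply: G0.
      by move: (H t); rewrite /s_ mulnBl.
    by rewrite -(ltr_pM2r hN) mul1r /G E -intrnat ltr_int.
  exists (fun k => if insub (val k) is Some t then G t else gm).
  split.
    move=> k; case: insubP => [t _ _|_]; first exact: Gb.
    have hj : (j%:R < N%:R :> R)%R by rewrite ltr_nat.
    have hi : (i%:R < j%:R :> R)%R by rewrite ltr_nat.
    split.
      by rewrite -(pmulr_lge0 _ hN) gmN subr_ge0 ltW.
    rewrite -(ltr_pM2r hN) mul1r gmN.
    have : (0 <= i%:R :> R)%R by rewrite ler0n.
    lra.
  split.
    rewrite big_ord_recr /= (eq_bigr G); last by move=> t _; rewrite valK.
    rewrite insubF; last exact: ltnn.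
    have -> : ((((\sum_(t < size lam) ceil_div (j * nth 0 lam t) N)%N)%:Z - j%:Z -
       (((\sum_(t < size lam) ceil_div (i * nth 0 lam t) N)%N)%:Z - i%:Z))%:~R
       = \sum_t ((cj t)%:R : R) - j%:R - (\sum_t ((ci t)%:R : R) - i%:R))%R.
      by rewrite !intrB !intrnat !natr_sum.
    have Sl : (\sum_t ((l t)%:R : R) = n%:R)%R by rewrite -natr_sum sl.
    have SG : (\sum_t G t = \sum_t ((cj t)%:R : R) - \sum_t ((ci t)%:R : R) - gm * \sum_t ((l t)%:R : R))%R.
      by rewrite /G !sumrB -mulr_sumr.
    rewrite SG Sl nE; lra.
  move=> t; rewrite /= valK insubF; last exact: ltnn.
  rewrite /G intrB !intrnat /cj /ci /l; ring.
Qed.
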